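(* Let $\mathrm{Bu}=\beta(B_3)$ and $\Delta=(\sigma_1\sigma_2\sigma_1)^2\in B_3$. The restriction $\overline{\rho}|_{\mathrm{Bu}}:\mathrm{Bu}\to\mathrm{PSL}(2,\mathbb{Z})$ is surjective and its kernel is the center $Z(\mathrm{Bu})$, which is infinite cyclic generated by $\beta(\Delta)$. In other words, $\overline{\rho}$ induces a short exact sequence $1\to\mathbb{Z}\to\mathrm{Bu}\to\mathrm{PSL}(2,\mathbb{Z})\to1$.
   Context: Let $B_3$ be the braid group on three strands with standard generators $\sigma_1,\sigma_2$, and $\beta:B_3\to\mathrm{GL}(3,\mathbb{Z}[t,t^{-1}])$ the Burau representation $\beta(\sigma_1)=\begin{pmatrix}1-t&t&0\\1&0&0\\0&0&1\end{pmatrix}$, $\beta(\sigma_2)=\begin{pmatrix}1&0&0\\0&1-t&t\\0&1&0\end{pmatrix}$. For $A\in\mathrm{Bu}$, let $B=A|_{t=-1}\in\mathrm{GL}(3,\mathbb{Z})$ and $\rho(B)=\begin{pmatrix}1-B_{13}&1-B_{11}\\1-B_{33}&1-B_{31}\end{pmatrix}\in\mathrm{GL}(2,\mathbb{Z})$; $\overline{\rho}(A)$ is the image of $\rho(B)$ in the projective linear group $\mathrm{PGL}(2,\mathbb{Q}(t))$ (quotient by nonzero scalars). $\mathrm{PSL}(2,\mathbb{Z})$ is identified with the image of $\mathrm{SL}(2,\mathbb{Z})$ there. *)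

(* Defs.v *)
From HB Require Import structures.
From mathcomp Require Import all_boot all_order all_algebra fraction.
From Stdlib Require Import ClassicalEpsilon.
Set Implicit Arguments. Unset Strict Implicit. Unset Printing Implicit Defensive.
Import Order.TTheory GRing.Theory Num.Theory.
Local Open Scope ring_scope.

(* K = Q(t), realised as the fraction field of Z[t]; Z[t,t^-1] sits inside it. *)
Definition K : Type := {fraction {poly int}}.
Definition tK : K := tofrac ('X : {poly int}).

Definition mx3 (a b c d e f g h k : K) : 'M[K]_3 :=
  \matrix_(i < 3, j < 3) nth 0 (nth [::] [:: [:: a; b; c]; [:: d; e; f]; [:: g; h; k]] i) j.

Definition beta_s1 : 'M[K]_3 := mx3 (1 - tK) tK 0  1 0 0  0 0 1.
Definition beta_s2 : 'M[K]_3 := mx3 1 0 0  0 (1 - tK) tK  0 1 0.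

(* braid words: (true, _) = sigma_1, (false, _) = sigma_2; (_, true) = inverse *)
Definition beta_gen (x : bool * bool) : 'M[K]_3 :=
  let g := if x.1 then beta_s1 else beta_s2 in if x.2 then invmx g else g.
Definition beta_word (w : seq (bool * bool)) : 'M[K]_3 :=
  foldr (fun x acc => beta_gen x *m acc) 1%:M w.

Definition inBu (A : 'M[K]_3) : Prop := exists w, A = beta_word w.
Definition inZBu (A : 'M[K]_3) : Prop :=
  inBu A /\ forall C, inBu C -> A *m C = C *m A.

Definition beta_Delta : 'M[K]_3 :=
  beta_word [:: (true, false); (false, false); (true, false);
                (true, false); (false, false); (true, false)].

(* specialization t = -1: x has value z if x = n/d with d(-1) <> 0 and
   n(-1) = z d(-1).  (On Z[t,t^-1] this is ordinary evaluation at -1.) *)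
Definition ev_rel (x : K) (z : int) : Prop :=
  exists n d : {poly int}, d.[-1] != 0 /\ x = tofrac n / tofrac d /\ n.[-1] = z * d.[-1].
Definition ev_m1 (x : K) : int := epsilon (inhabits 0) (ev_rel x).
Definition spec_m1 (A : 'M[K]_3) : 'M[int]_3 := \matrix_(i, j) ev_m1 (A i j).

Definition rho (B : 'M[int]_3) : 'M[int]_2 :=
  \matrix_(i < 2, j < 2)
    (if (i : nat) == 0%N then
       (if (j : nat) == 0%N then 1 - B (inord 0) (inord 2) else 1 - B (inord 0) (inord 0))
     else
       (if (j : nat) == 0%N then 1 - B (inord 2) (inord 2) else 1 - B (inord 2) (inord 0))).

Definition intmxK (M : 'M[int]_2) : 'M[K]_2 := map_mx (fun z : int => z%:~R) M.

(* rho(A|_{t=-1}) as a matrix over Q(t); rhobar(A) is its class in PGL(2,Q(t)) *)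
Definition rhoK (A : 'M[K]_3) : 'M[K]_2 := intmxK (rho (spec_m1 A)).

Definition pgl_eq (P Q : 'M[K]_2) : Prop := exists c : K, c != 0 /\ P = c *: Q.

(* Main.v *)
Require Import Defs.
From HB Require Import structures.
From mathcomp Require Import all_boot all_order all_algebra fraction.
From mathcomp Require Import ring zify.
From Stdlib Require Import ClassicalEpsilon.
Set Implicit Arguments. Unset Strict Implicit. Unset Printing Implicit Defensive.
Import Order.TTheory GRing.Theory Num.Theory.
Local Open Scope ring_scope.

Section Gen.
Variable R : unitRingType.
Variables s1 s2 a b z : R.
Hypothesis ha : a * a = z.
Hypothesis hb : b * b * b = z.
Hypothesis uz : z \is a GRing.unit.
Hypothesis us1 : s1 \is a GRing.unit.
Hypothesis us2 : s2 \is a GRing.unit.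
Hypothesis hs1 : z * s1 = b * b * a.
Hypothesis hs1i : z = a * b * s1.
Hypothesis hs2 : z * s2 = a * b * b.
Hypothesis hs2i : z = b * a * s2.

Definition gen (g : bool * bool) : R :=
  let x := if g.1 then s1 else s2 in if g.2 then x^-1 else x.
Definition evw (w : seq (bool * bool)) : R := foldr (fun g acc => gen g * acc) 1 w.

Lemma evw_cat w1 w2 : evw (w1 ++ w2) = evw w1 * evw w2.
Proof. by elim: w1 => [|g w IH] /=; rewrite ?mul1r // IH mulrA. Qed.

Definition core := (option bool * seq bool * bool)%type.
Definition blk (e : bool) := if e then b * b else b.
Definition blocks (B : seq bool) := foldr (fun e acc => a * blk e * acc) 1 B.
Definition pre (o : option bool) := if o is Some e then blk e else 1.
Definition coreval (c : core) :=
  let: (o, B, p) := c in pre o * blocks B * (if p then a else 1).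
Definition nfval (n : int * core) := z ^ n.1 * coreval n.2.

Definition act_a (c : core) : bool * core :=
  match c with
  | (Some e, B, p) => (false, (None, e :: B, p))
  | (None, e :: B, p) => (true, (Some e, B, p))
  | (None, [::], false) => (false, (None, [::], true))
  | (None, [::], true) => (true, (None, [::], false))
  end.
Definition act_b (c : core) : bool * core :=
  match c with
  | (None, B, p) => (false, (Some false, B, p))
  | (Some false, B, p) => (false, (Some true, B, p))
  | (Some true, B, p) => (true, (None, B, p))
  end.

Lemma act_aP c : a * coreval c = (if (act_a c).1 then z else 1) * coreval (act_a c).2.
Proof.
case: c => [[[e|] [|e2 B]] p] /=; rewrite ?mul1r ?mulr1 ?mulrA //.
- by case: p; rewrite /= ?mulr1 ?mul1r ?mulrA ?ha.
- by rewrite ha.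
Qed.

Lemma act_bP c : b * coreval c = (if (act_b c).1 then z else 1) * coreval (act_b c).2.
Proof.
case: c => [[[[]|] B] p] /=; rewrite ?mul1r ?mulrA //.
by rewrite hb.
Qed.

Lemma za : GRing.comm z a. Proof. by rewrite /GRing.comm -ha mulrA. Qed.
Lemma zb : GRing.comm z b. Proof. by rewrite /GRing.comm -hb !mulrA. Qed.

Definition nf_a (n : int * core) : int * core :=
  ((n.1 + (act_a n.2).1%N%:Z)%R, (act_a n.2).2).
Definition nf_b (n : int * core) : int * core :=
  ((n.1 + (act_b n.2).1%N%:Z)%R, (act_b n.2).2).

Lemma zbool (d : bool) : z ^ (d%N%:Z) = if d then z else 1.
Proof. by case: d; rewrite ?expr1z ?expr0z. Qed.

Lemma nf_aP n : a * nfval n = nfval (nf_a n).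
Proof.
case: n => k c; rewrite /nfval /nf_a /= mulrA.
have -> : a * z ^ k = z ^ k * a by exact: commrXz k (commr_sym za).
by rewrite -mulrA act_aP exprzDr // zbool mulrA.
Qed.

Lemma nf_bP n : b * nfval n = nfval (nf_b n).
Proof.
case: n => k c; rewrite /nfval /nf_b /= mulrA.
have -> : b * z ^ k = z ^ k * b by exact: commrXz k (commr_sym zb).
by rewrite -mulrA act_bP exprzDr // zbool mulrA.
Qed.

Definition shift (n : int * core) : int * core := ((n.1 - 1)%R, n.2).
Lemma shiftP n : z^-1 * nfval n = nfval (shift n).
Proof.
case: n => k c; rewrite /nfval /shift /= mulrA; congr (_ * _).
by rewrite addrC exprzDr // -exprz_inv expr1z.
Qed.

Definition nf_gen (g : bool * bool) (n : int * core) : int * core :=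
  match g with
  | (true, false) => shift (nf_b (nf_b (nf_a n)))
  | (true, true) => shift (nf_a (nf_b n))
  | (false, false) => shift (nf_a (nf_b (nf_b n)))
  | (false, true) => shift (nf_b (nf_a n))
  end.

Definition nf_of (w : seq (bool * bool)) := foldr nf_gen (0%R, (None, [::], false)) w.

Lemma gen_nf g x : gen g * x = z^-1 * ((match g with
  | (true, false) => b * (b * (a * x))
  | (true, true) => a * (b * x)
  | (false, false) => a * (b * (b * x))
  | (false, true) => b * (a * x)
  end)).
Proof.
case: g => [[] []] /=.
- have e : a * b = z * s1^-1 by rewrite hs1i mulrK.
  by rewrite (mulrA a b x) e -mulrA mulKr.
- have -> : b * (b * (a * x)) = z * s1 * x by rewrite hs1 !mulrA.
  by rewrite -mulrA mulKr.
- have e : b * a = z * s2^-1 by rewrite hs2i mulrK.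
  by rewrite (mulrA b a x) e -mulrA mulKr.
- have -> : a * (b * (b * x)) = z * s2 * x by rewrite hs2 !mulrA.
  by rewrite -mulrA mulKr.
Qed.

Lemma nf_ofP w : evw w = nfval (nf_of w).
Proof.
elim: w => [|g w IH] /=.
  by rewrite /nfval /= expr0z !mul1r.
rewrite IH gen_nf; case: g => [[] []] /=;
by rewrite !(nf_aP, nf_bP) shiftP.
Qed.

Lemma zs1 : GRing.comm z s1.
Proof.
have -> : s1 = z^-1 * (b * b * a) by rewrite -hs1 mulKr.
apply: commrM; first exact/commrV/commr_refl.
apply: commrM; last exact: za.
by apply: commrM; apply: zb.
Qed.
Lemma zs2 : GRing.comm z s2.
Proof.
have -> : s2 = z^-1 * (a * b * b) by rewrite -hs2 mulKr.
apply: commrM; first exact/commrV/commr_refl.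
apply: commrM; last exact: zb.
by apply: commrM; [apply: za | apply: zb].
Qed.
Lemma zgen g : GRing.comm z (gen g).
Proof.
case: g => [[] []]; rewrite /gen /=; by [apply/commrV/zs1 | apply/zs1 | apply/commrV/zs2 | apply/zs2].
Qed.
Lemma zevw w : GRing.comm z (evw w).
Proof. elim: w => [|g w IH] /=; [exact: commr1 | exact: commrM (zgen g) IH]. Qed.
Lemma zkevw k w : GRing.comm (z ^ k) (evw w).
Proof. exact/commr_sym/commrXz/commr_sym/zevw. Qed.
End Gen.
Definition m2 (R : nzRingType) (p q r s : R) : 'M[R]_2 :=
  \matrix_(i < 2, j < 2) if (i : nat) == 0%N then (if (j : nat) == 0%N then p else q)
                         else (if (j : nat) == 0%N then r else s).

Lemma m2_mul (R : nzRingType) (p q r s p' q' r' s' : R) :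
  m2 p q r s *m m2 p' q' r' s' =
  m2 (p * p' + q * r') (p * q' + q * s') (r * p' + s * r') (r * q' + s * s').
Proof.
apply/matrixP => i j; rewrite !mxE !big_ord_recr big_ord0 /= !mxE add0r.
by case: i => [[|[|//]] Hi]; case: j => [[|[|//]] Hj].
Qed.

Lemma m2_eta (R : nzRingType) (M : 'M[R]_2) :
  M = m2 (M ord0 ord0) (M ord0 ord_max) (M ord_max ord0) (M ord_max ord_max).
Proof.
apply/matrixP => i j; rewrite !mxE.
by case: i => [[|[|//]] Hi]; case: j => [[|[|//]] Hj]; congr (M _ _); apply: val_inj.
Qed.

Lemma m2_inj (R : nzRingType) (p q r s p' q' r' s' : R) :
  m2 p q r s = m2 p' q' r' s' -> [/\ p = p', q = q', r = r' & s = s'].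
Proof.
move=> E; have F := congr1 (fun M : 'M[R]_2 => (M ord0 ord0, M ord0 ord_max, M ord_max ord0, M ord_max ord_max)) E.
by move: F; rewrite !mxE /= => -[-> -> -> ->].
Qed.

Lemma m2_scalar (R : nzRingType) (x : R) : x%:M = m2 x 0 0 x.
Proof.
apply/matrixP => i j; rewrite !mxE.
by case: i => [[|[|//]] Hi]; case: j => [[|[|//]] Hj].
Qed.

Lemma m2_1 (R : nzRingType) : 1%:M = m2 1 0 0 (1 : R).
Proof. exact: m2_scalar. Qed.

Lemma m2_opp (R : nzRingType) (p q r s : R) : - m2 p q r s = m2 (-p) (-q) (-r) (-s).
Proof.
apply/matrixP => i j; rewrite !mxE.
by case: i => [[|[|//]] Hi]; case: j => [[|[|//]] Hj].
Qed.

Lemma det_m2 (R : comNzRingType) (p q r s : R) : \det (m2 p q r s) = p * s - q * r.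
Proof.
rewrite (expand_det_row _ ord0) !big_ord_recr big_ord0 /= add0r.
rewrite /cofactor !det_mx11 !mxE /= expr0 expr1 mul1r mulN1r mulrN.
by [].
Qed.
Definition s1I : 'M[int]_2 := m2 1 (-1) 0 1.
Definition s2I : 'M[int]_2 := m2 1 0 1 1.
Definition aI : 'M[int]_2 := m2 0 (-1) 1 0.
Definition bI : 'M[int]_2 := m2 0 (-1) 1 1.
Definition zI : 'M[int]_2 := -1.

Lemma m2_mulr (p q r s p' q' r' s' : int) :
  (m2 p q r s : 'M[int]_2) * m2 p' q' r' s' =
  m2 (p * p' + q * r') (p * q' + q * s') (r * p' + s * r') (r * q' + s * s').
Proof. exact: m2_mul. Qed.

Lemma zIE : zI = m2 (-1) 0 0 (-1).
Proof. by rewrite /zI (_ : (1 : 'M[int]_2) = m2 1 0 0 1) ?m2_opp //; exact: m2_1. Qed.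

Lemma m2_unit (p q r s : int) : p * s - q * r = 1 -> (m2 p q r s : 'M[int]_2) \is a GRing.unit.
Proof. by move=> h; have U : (m2 p q r s : 'M[int]_2) \in unitmx by rewrite unitmxE det_m2 h unitr1. Qed.

Ltac m2c := rewrite /s1I /s2I /aI /bI ?zIE ?m2_mulr; congr m2; ring.

Lemma hIa : aI * aI = zI. Proof. m2c. Qed.
Lemma hIb : bI * bI * bI = zI. Proof. m2c. Qed.
Lemma hIz : zI \is a GRing.unit. Proof. by rewrite zIE; apply: m2_unit; ring. Qed.
Lemma hIs1 : s1I \is a GRing.unit. Proof. by apply: m2_unit; ring. Qed.
Lemma hIs2 : s2I \is a GRing.unit. Proof. by apply: m2_unit; ring. Qed.
Lemma hIs1e : zI * s1I = bI * bI * aI. Proof. m2c. Qed.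
Lemma hIs1i : zI = aI * bI * s1I. Proof. m2c. Qed.
Lemma hIs2e : zI * s2I = aI * bI * bI. Proof. m2c. Qed.
Lemma hIs2i : zI = bI * aI * s2I. Proof. m2c. Qed.

Lemma blocksI B : exists p q r s : int,
  (blocks aI bI B = m2 p q r s \/ blocks aI bI B = - m2 p q r s) /\
  [/\ 0 <= p, 0 <= q, 0 <= r & 0 <= s] /\ 1 <= p + q /\ 1 <= r + s /\
  (2 + (size B)%:Z <= p + q + r + s).
Proof.
elim: B => [|e B [p [q [r [s [E [[p0 q0 r0 s0] [h1 [h2 h3]]]]]]]]] /=.
  exists 1, 0, 0, 1; split; first by left; exact: m2_1.
  by split; [split|]; lia.
case: e.
- exists p, q, (p + r), (q + s); split.
    have -> : aI * blk bI true = - m2 1 0 1 1 by rewrite /blk /aI /bI !m2_mulr m2_opp; congr m2; ring.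
    case: E => ->; [right | left]; rewrite ?mulrN mulNr ?opprK m2_mulr ?m2_opp; congr m2; ring.
  by split; [split|]; lia.
- exists (p + r), (q + s), r, s; split.
    have -> : aI * blk bI false = - m2 1 1 0 1 by rewrite /blk /aI /bI !m2_mulr m2_opp; congr m2; ring.
    case: E => ->; [right | left]; rewrite ?mulrN mulNr ?opprK m2_mulr ?m2_opp; congr m2; ring.
  by split; [split|]; lia.
Qed.

Lemma one2 : (1 : 'M[int]_2) = m2 1 0 0 1. Proof. exact: m2_1. Qed.
Lemma mone2 : (-1 : 'M[int]_2) = m2 (-1) 0 0 (-1). Proof. by rewrite one2 m2_opp. Qed.

Lemma coreI c : coreval aI bI c = 1 \/ coreval aI bI c = -1 -> c = (None, [::], false).
Proof.
case: c => [[o B] pa] H.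
have [p [q [r [s [E [[p0 q0 r0 s0] [h1 [h2 h3]]]]]]]] := blocksI B.
case: o pa H => [[]|] [] /= H; case: E => E; rewrite E in H;
  rewrite /pre /blk /aI /bI ?mulr1 ?mul1r ?mulrN ?mulNr ?m2_mulr ?m2_opp ?m2_mulr ?m2_opp in H;
  rewrite ?mone2 ?one2 in H;
  try (by case: H => /m2_inj [e1 e2 e3 e4]; lia).
all: case: B h3 {E} => [|e B] h3 //.
all: by case: H => /m2_inj [e1 e2 e3 e4]; move: h3 => /=; lia.
Qed.
Definition mk3 (R : nzRingType) (a b c d e f g h k : R) : 'M[R]_3 :=
  \matrix_(i < 3, j < 3)
    if (i : nat) == 0%N then (if (j : nat) == 0%N then a else if (j : nat) == 1%N then b else c)
    else if (i : nat) == 1%N then (if (j : nat) == 0%N then d else if (j : nat) == 1%N then e else f)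
    else (if (j : nat) == 0%N then g else if (j : nat) == 1%N then h else k).

Lemma mk3_mul (R : nzRingType) (a b c d e f g h k a' b' c' d' e' f' g' h' k' : R) :
  mk3 a b c d e f g h k *m mk3 a' b' c' d' e' f' g' h' k' =
  mk3 (a * a' + b * d' + c * g') (a * b' + b * e' + c * h') (a * c' + b * f' + c * k')
      (d * a' + e * d' + f * g') (d * b' + e * e' + f * h') (d * c' + e * f' + f * k')
      (g * a' + h * d' + k * g') (g * b' + h * e' + k * h') (g * c' + h * f' + k * k').
Proof.
apply/matrixP => i j; rewrite !mxE !big_ord_recr big_ord0 /= !mxE add0r.
by case: i => [[|[|[|//]]] Hi]; case: j => [[|[|[|//]]] Hj].
Qed.

Lemma mx3E (a b c d e f g h k : K) : mx3 a b c d e f g h k = mk3 a b c d e f g h k.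
Proof.
apply/matrixP => i j; rewrite !mxE.
by case: i => [[|[|[|//]]] Hi]; case: j => [[|[|[|//]]] Hj].
Qed.

Lemma mk3_1 (R : nzRingType) : 1%:M = mk3 1 0 0 0 1 0 0 0 (1 : R).
Proof.
apply/matrixP => i j; rewrite !mxE.
by case: i => [[|[|[|//]]] Hi]; case: j => [[|[|[|//]]] Hj].
Qed.

Definition mkInv (x y u v : int) : 'M[int]_3 :=
  mk3 x (1 - x - y) y (x + u - 1) (3 - x - y - u - v) (y + v - 1) u (1 - u - v) v.

Lemma mkInv_mul x y u v x' y' u' v' :
  mkInv x y u v *m mkInv x' y' u' v' =
  mkInv (x * x' + (1 - x - y) * (x' + u' - 1) + y * u')
        (x * y' + (1 - x - y) * (y' + v' - 1) + y * v')
        (u * x' + (1 - u - v) * (x' + u' - 1) + v * u')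
        (u * y' + (1 - u - v) * (y' + v' - 1) + v * v').
Proof. rewrite /mkInv mk3_mul; congr mk3; ring. Qed.

Lemma mkInv_1 : 1%:M = mkInv 1 0 0 1.
Proof. rewrite mk3_1 /mkInv; congr mk3; ring. Qed.

Lemma rho_mkInv x y u v : rho (mkInv x y u v) = m2 (1 - y) (1 - x) (1 - v) (1 - u).
Proof.
apply/matrixP => i j; rewrite !mxE !inordK //;
by case: i => [[|[|//]] Hi]; case: j => [[|[|//]] Hj].
Qed.

Lemma rho_mul x y u v x' y' u' v' :
  rho (mkInv x y u v *m mkInv x' y' u' v') = rho (mkInv x y u v) *m rho (mkInv x' y' u' v').
Proof. rewrite mkInv_mul !rho_mkInv m2_mul; congr m2; ring. Qed.

Definition igen (g : bool * bool) : 'M[int]_3 :=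
  match g with
  | (true, false) => mkInv 2 0 0 1
  | (true, true) => mkInv 0 0 0 1
  | (false, false) => mkInv 1 0 0 0
  | (false, true) => mkInv 1 0 0 2
  end.
Definition iword (w : seq (bool * bool)) : 'M[int]_3 := foldr (fun g acc => igen g *m acc) 1%:M w.

Lemma iword_inv w : exists x y u v, iword w = mkInv x y u v.
Proof.
elim: w => [|g w [x [y [u [v E]]]]] /=; first by exists 1, 0, 0, 1; exact: mkInv_1.
rewrite E; case: g => [[] []] /=; rewrite mkInv_mul; by do 4 eexists.
Qed.

Lemma inv_uniq (R : unitRingType) (x y : R) : x \is a GRing.unit -> x * y = 1 -> x^-1 = y.
Proof. by move=> ux h; rewrite -(mulKr ux y) h mulr1. Qed.

Lemma rho_igen g : rho (igen g) = gen s1I s2I g.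
Proof.
case: g => [[] []]; rewrite /gen /= rho_mkInv /s1I /s2I.
- symmetry; apply: inv_uniq; first exact: hIs1.
  rewrite m2_mulr one2; congr m2; ring.
- congr m2; ring.
- symmetry; apply: inv_uniq; first exact: hIs2.
  rewrite m2_mulr one2; congr m2; ring.
- congr m2; ring.
Qed.

Lemma rho_iword w : rho (iword w) = evw s1I s2I w.
Proof.
elim: w => [|g w IH] /=.
  by rewrite mkInv_1 rho_mkInv one2; congr m2; ring.
have [x [y [u [v E]]]] := iword_inv w.
have [x' [y' [u' [v' E']]]] : exists x y u v, igen g = mkInv x y u v.
  by case: g => [[] []]; do 4 eexists.
by rewrite E E' rho_mul -E' -E IH rho_igen.
Qed.
Lemma d_neq0 (d : {poly int}) : d.[-1] != 0 -> tofrac d != 0 :> K.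
Proof. by apply: contra; rewrite tofrac_eq0 => /eqP ->; rewrite horner0. Qed.

Lemma tK_neq0 : tK != 0.
Proof. by rewrite /tK tofrac_eq0 polyX_eq0. Qed.

Lemma ev_uniq x a b : ev_rel x a -> ev_rel x b -> a = b.
Proof.
move=> [n [d [hd [-> hn]]]] [n' [d' [hd' [E hn']]]].
move/eqP: E; rewrite eqr_div ?d_neq0 // -!tofracM tofrac_eq => /eqP E.
have := congr1 (fun p : {poly int} => p.[-1]) E; rewrite /= !hornerM hn hn'.
move/eqP; rewrite -subr_eq0 -mulrA [d.[-1] * _]mulrC -mulrA -mulrBl mulf_eq0.
by rewrite mulf_eq0 (negbTE hd) (negbTE hd') !orbF subr_eq0 => /eqP.
Qed.

Lemma ev_m1E x a : ev_rel x a -> ev_m1 x = a.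
Proof.
move=> h; apply: (ev_uniq (x := x)) => //.
by apply: epsilon_spec; exists a.
Qed.

Lemma evD x y a b : ev_rel x a -> ev_rel y b -> ev_rel (x + y) (a + b).
Proof.
move=> [n [d [hd [-> hn]]]] [n' [d' [hd' [-> hn']]]].
exists (n * d' + n' * d), (d * d'); split; first by rewrite hornerM mulf_neq0.
split; last by rewrite hornerD !hornerM hn hn'; ring.
by rewrite tofracD !tofracM addf_div ?d_neq0.
Qed.

Lemma evM x y a b : ev_rel x a -> ev_rel y b -> ev_rel (x * y) (a * b).
Proof.
move=> [n [d [hd [-> hn]]]] [n' [d' [hd' [-> hn']]]].
exists (n * n'), (d * d'); split; first by rewrite hornerM mulf_neq0.
split; last by rewrite !hornerM hn hn'; ring.
by rewrite !tofracM mulf_div.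
Qed.

Lemma evN x a : ev_rel x a -> ev_rel (- x) (- a).
Proof.
move=> [n [d [hd [-> hn]]]].
exists (- n), d; split => //; split; last by rewrite hornerN hn mulNr.
by rewrite tofracN mulNr.
Qed.

Lemma evC (c : int) : ev_rel (tofrac c%:P) c.
Proof.
exists c%:P, 1; split; first by rewrite hornerC oner_eq0.
by split; [rewrite tofrac1 divr1 | rewrite !hornerC mulr1].
Qed.

Lemma ev0 : ev_rel 0 0.
Proof. by have := evC 0; rewrite tofrac0. Qed.
Lemma ev1 : ev_rel 1 1.
Proof. by have := evC 1; rewrite tofrac1. Qed.

Lemma evt : ev_rel tK (-1).
Proof.
exists 'X, 1; split; first by rewrite hornerC oner_eq0.
by split; [rewrite tofrac1 divr1 | rewrite hornerX hornerC mulr1].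
Qed.

Lemma evti : ev_rel tK^-1 (-1).
Proof.
exists 1, 'X; split; first by rewrite hornerX oppr_eq0 oner_eq0.
by split; [rewrite tofrac1 div1r | rewrite hornerX hornerC mulrNN mulr1].
Qed.

Lemma evB x y a b : ev_rel x a -> ev_rel y b -> ev_rel (x - y) (a - b).
Proof. by move=> h1 h2; apply: evD h1 (evN h2). Qed.

Lemma ev_eq x a b : ev_rel x a -> a = b -> ev_rel x b.
Proof. by move=> h <-. Qed.
Definition bS1i : 'M[K]_3 := mk3 0 1 0 tK^-1 (1 - tK^-1) 0 0 0 1.
Definition bS2i : 'M[K]_3 := mk3 1 0 0 0 0 1 0 tK^-1 (1 - tK^-1).

Lemma tKV : tK * tK^-1 = 1. Proof. exact: mulfV tK_neq0. Qed.

Lemma s1_S1i : beta_s1 *m bS1i = 1%:M.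
Proof.
rewrite /beta_s1 mx3E /bS1i mk3_mul mk3_1; congr mk3; try ring.
- by rewrite !(mulr0, mul0r, add0r, addr0) tKV.
- by rewrite mulrBr tKV; ring.
Qed.

Lemma s2_S2i : beta_s2 *m bS2i = 1%:M.
Proof.
rewrite /beta_s2 mx3E /bS2i mk3_mul mk3_1; congr mk3; try ring.
- by rewrite !(mulr0, mul0r, add0r, addr0) tKV.
- by rewrite mulrBr tKV; ring.
Qed.
Section Braid.
Variable R : nzRingType.
Variables x y : R.
Hypothesis br : x * y * x = y * x * y.
Let a := x * y * x.
Let b := x * y.
Lemma brb : b * b * b = a * a.
Proof. by rewrite /a /b {2}br !mulrA. Qed.
Lemma brs1e : a * a * x = b * b * a.
Proof. by rewrite -brb /a /b !mulrA. Qed.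
Lemma brs1i : a * a = a * b * x.
Proof. by rewrite /a /b !mulrA. Qed.
Lemma brs2e : a * a * y = a * b * b.
Proof. by rewrite /a /b !mulrA. Qed.
Lemma brs2i : a * a = b * a * y.
Proof. by rewrite /a /b {2}br !mulrA. Qed.
End Braid.
Definition aK : 'M[K]_3 := beta_s1 * beta_s2 * beta_s1.
Definition bK : 'M[K]_3 := beta_s1 * beta_s2.

Lemma us1K : beta_s1 \is a GRing.unit.
Proof. case: (mulmx1_unit s1_S1i) => U _; exact U. Qed.
Lemma us2K : beta_s2 \is a GRing.unit.
Proof. case: (mulmx1_unit s2_S2i) => U _; exact U. Qed.

Lemma s1invK : beta_s1^-1 = bS1i.
Proof. apply: inv_uniq; [exact: us1K | exact: s1_S1i]. Qed.
Lemma s2invK : beta_s2^-1 = bS2i.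
Proof. apply: inv_uniq; [exact: us2K | exact: s2_S2i]. Qed.

Lemma us1M : beta_s1 \in unitmx.
Proof. case: (mulmx1_unit s1_S1i) => U _; exact U. Qed.
Lemma us2M : beta_s2 \in unitmx.
Proof. case: (mulmx1_unit s2_S2i) => U _; exact U. Qed.
Lemma invmx_s1 : invmx beta_s1 = bS1i.
Proof. rewrite -[LHS]mulmx1 -s1_S1i (mulKmx us1M); reflexivity. Qed.
Lemma invmx_s2 : invmx beta_s2 = bS2i.
Proof. rewrite -[LHS]mulmx1 -s2_S2i (mulKmx us2M); reflexivity. Qed.

Lemma beta_genE g : beta_gen g = gen beta_s1 beta_s2 g.
Proof.
case: g => [[] []]; rewrite /beta_gen /gen /=.
- by rewrite invmx_s1 s1invK.
- reflexivity.
- by rewrite invmx_s2 s2invK.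
- reflexivity.
Qed.

Lemma beta_wordE w : beta_word w = evw beta_s1 beta_s2 w.
Proof. elim: w => [|g w IH] /=; first reflexivity. rewrite IH beta_genE; reflexivity. Qed.

Lemma mk3_mulr (R : nzRingType) (a b c d e f g h k a' b' c' d' e' f' g' h' k' : R) :
  (mk3 a b c d e f g h k : 'M[R]_3) * mk3 a' b' c' d' e' f' g' h' k' =
  mk3 (a * a' + b * d' + c * g') (a * b' + b * e' + c * h') (a * c' + b * f' + c * k')
      (d * a' + e * d' + f * g') (d * b' + e * e' + f * h') (d * c' + e * f' + f * k')
      (g * a' + h * d' + k * g') (g * b' + h * e' + k * h') (g * c' + h * f' + k * k').
Proof. exact: mk3_mul. Qed.

Lemma zKE : beta_Delta = aK * aK.
Proof. rewrite /beta_Delta beta_wordE /= /gen /= mulr1 /aK !mulrA; reflexivity. Qed.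

Lemma uzK : beta_Delta \is a GRing.unit.
Proof.
have h1 := us1K; have h2 := us2K.
rewrite zKE /aK !mulrA (unitrMl _ h1) (unitrMl _ h2) (unitrMl _ h1) (unitrMl _ h1) (unitrMl _ h2).
exact h1.
Qed.

Ltac kc := rewrite ?zKE /aK /bK /beta_s1 /beta_s2 !mx3E !mk3_mulr; congr mk3; ring.

Lemma braidK : beta_s1 * beta_s2 * beta_s1 = beta_s2 * beta_s1 * beta_s2. Proof. kc. Qed.

Lemma hKa : aK * aK = beta_Delta. Proof. by rewrite zKE. Qed.
Lemma hKb : bK * bK * bK = beta_Delta. Proof. by rewrite zKE /aK /bK (brb braidK). Qed.
Lemma hKs1e : beta_Delta * beta_s1 = bK * bK * aK. Proof. by rewrite zKE /aK /bK (brs1e braidK). Qed.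
Lemma hKs1i : beta_Delta = aK * bK * beta_s1. Proof. by rewrite zKE /aK /bK (brs1i beta_s1 beta_s2). Qed.
Lemma hKs2e : beta_Delta * beta_s2 = aK * bK * bK. Proof. by rewrite zKE /aK /bK (brs2e beta_s1 beta_s2). Qed.
Lemma hKs2i : beta_Delta = bK * aK * beta_s2. Proof. by rewrite zKE /aK /bK (brs2i braidK). Qed.
Definition mev (M : 'M[K]_3) (N : 'M[int]_3) := forall i j, ev_rel (M i j) (N i j).

Lemma mev_mk3 (a b c d e f g h k : K) (a' b' c' d' e' f' g' h' k' : int) :
  ev_rel a a' -> ev_rel b b' -> ev_rel c c' -> ev_rel d d' -> ev_rel e e' ->
  ev_rel f f' -> ev_rel g g' -> ev_rel h h' -> ev_rel k k' ->
  mev (mk3 a b c d e f g h k) (mk3 a' b' c' d' e' f' g' h' k').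
Proof.
move=> *; move=> i j; rewrite !mxE.
by case: i => [[|[|[|//]]] Hi]; case: j => [[|[|[|//]]] Hj].
Qed.

Lemma mev_mul A B C D : mev A B -> mev C D -> mev (A *m C) (B *m D).
Proof.
move=> h1 h2 i j; rewrite !mxE.
apply: (big_ind2 ev_rel); [exact: ev0 | move=> *; exact: evD | move=> k _; exact: evM].
Qed.

Lemma mev_1 : mev 1%:M 1%:M.
Proof. rewrite !mk3_1; apply: mev_mk3; (exact: ev0 || exact: ev1). Qed.

Lemma mev_gen g : mev (beta_gen g) (igen g).
Proof.
case: g => [[] []]; rewrite /beta_gen /igen /mkInv /=.
- rewrite invmx_s1 /bS1i; apply: mev_mk3; try (apply: ev_eq; [exact: ev0 | by []]);
   try (apply: ev_eq; [exact: ev1 | by []]).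
  + by apply: ev_eq; [exact: evti | by []].
  + by apply: ev_eq; [exact: evB ev1 evti | by []].
- rewrite /beta_s1 mx3E; apply: mev_mk3; try (apply: ev_eq; [exact: ev0 | by []]);
   try (apply: ev_eq; [exact: ev1 | by []]).
  + by apply: ev_eq; [exact: evB ev1 evt | by []].
  + by apply: ev_eq; [exact: evt | by []].
- rewrite invmx_s2 /bS2i; apply: mev_mk3; try (apply: ev_eq; [exact: ev0 | by []]);
   try (apply: ev_eq; [exact: ev1 | by []]).
  + by apply: ev_eq; [exact: evti | by []].
  + by apply: ev_eq; [exact: evB ev1 evti | by []].
- rewrite /beta_s2 mx3E; apply: mev_mk3; try (apply: ev_eq; [exact: ev0 | by []]);
   try (apply: ev_eq; [exact: ev1 | by []]).
  + by apply: ev_eq; [exact: evB ev1 evt | by []].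
  + by apply: ev_eq; [exact: evt | by []].
Qed.

Lemma mev_word w : mev (beta_word w) (iword w).
Proof.
elim: w => [|g w IH] /=; first exact: mev_1.
exact: mev_mul (mev_gen g) IH.
Qed.

Lemma spec_word w : spec_m1 (beta_word w) = iword w.
Proof. by apply/matrixP => i j; rewrite mxE; apply: ev_m1E; apply: mev_word. Qed.

Definition rword w := evw s1I s2I w.

Lemma rhoK_word w : rhoK (beta_word w) = intmxK (rword w).
Proof. by rewrite /rhoK spec_word rho_iword. Qed.
Lemma s1I_inv : s1I^-1 = m2 1 1 0 1.
Proof. apply: inv_uniq; first exact: hIs1. by rewrite /s1I m2_mulr one2; congr m2; ring. Qed.
Lemma s2I_inv : s2I^-1 = m2 1 0 (-1) 1.
Proof. apply: inv_uniq; first exact: hIs2. by rewrite /s2I m2_mulr one2; congr m2; ring. Qed.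

Lemma genI g : gen s1I s2I g =
  match g with
  | (true, false) => m2 1 (-1) 0 1
  | (true, true) => m2 1 1 0 1
  | (false, false) => m2 1 0 1 1
  | (false, true) => m2 1 0 (-1) 1
  end.
Proof. by case: g => [[] []]; rewrite /gen /= ?s1I_inv ?s2I_inv. Qed.

Lemma rword_cat w1 w2 : rword (w1 ++ w2) = rword w1 * rword w2.
Proof. exact: evw_cat. Qed.

Lemma det_rword w : \det (rword w) = 1.
Proof.
elim: w => [|g w IH] /=; first by rewrite det1.
rewrite -/(rword w) det_mulmx IH mulr1 genI.
by case: g => [[] []]; rewrite det_m2; ring.
Qed.

Definition GI (M : 'M[int]_2) := exists w, rword w = M.

Lemma GI_mul X Y : GI X -> GI Y -> GI (X * Y).
Proof. by move=> [w1 <-] [w2 <-]; exists (w1 ++ w2); rewrite rword_cat. Qed.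

Lemma GI_gen g : GI (gen s1I s2I g).
Proof. by exists [:: g]; rewrite /rword /= mulr1. Qed.

Lemma GI_T (k : int) : GI (m2 1 k 0 1).
Proof.
have P : forall n : nat, GI (m2 1 n%:Z 0 1) /\ GI (m2 1 (- n%:Z) 0 1).
  elim => [|n [IH1 IH2]].
    by split; exists [::]; rewrite /rword /= one2 ?oppr0.
  have hS : (n.+1)%:Z = n%:Z + 1 by rewrite -[n.+1]addn1 PoszD.
  split.
    have -> : m2 1 n.+1%:Z 0 1 = m2 1 1 0 1 * m2 1 n%:Z 0 1.
      by rewrite m2_mulr; congr m2; rewrite ?hS; ring.
    by apply: GI_mul => //; have := GI_gen (true, true); rewrite genI.
  have -> : m2 1 (- n.+1%:Z) 0 1 = m2 1 (-1) 0 1 * m2 1 (- n%:Z) 0 1.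
    by rewrite m2_mulr; congr m2; rewrite ?hS; ring.
  by apply: GI_mul => //; have := GI_gen (true, false); rewrite genI.
case: k => n; first exact: (P n).1.
by rewrite NegzE; exact: (P n.+1).2.
Qed.

Lemma GI_U (k : int) : GI (m2 1 0 k 1).
Proof.
have P : forall n : nat, GI (m2 1 0 n%:Z 1) /\ GI (m2 1 0 (- n%:Z) 1).
  elim => [|n [IH1 IH2]].
    by split; exists [::]; rewrite /rword /= one2 ?oppr0.
  have hS : (n.+1)%:Z = n%:Z + 1 by rewrite -[n.+1]addn1 PoszD.
  split.
    have -> : m2 1 0 n.+1%:Z 1 = m2 1 0 1 1 * m2 1 0 n%:Z 1.
      by rewrite m2_mulr; congr m2; rewrite ?hS; ring.
    by apply: GI_mul => //; have := GI_gen (false, false); rewrite genI.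
  have -> : m2 1 0 (- n.+1%:Z) 1 = m2 1 0 (-1) 1 * m2 1 0 (- n%:Z) 1.
    by rewrite m2_mulr; congr m2; rewrite ?hS; ring.
  by apply: GI_mul => //; have := GI_gen (false, true); rewrite genI.
case: k => n; first exact: (P n).1.
by rewrite NegzE; exact: (P n.+1).2.
Qed.

Lemma GI_m1 : GI (m2 (-1) 0 0 (-1)).
Proof.
exists [:: (true, false); (false, false); (true, false); (true, false); (false, false); (true, false)].
by rewrite /rword /= !genI mulr1 !m2_mulr; congr m2.
Qed.
Lemma int_unit (p s : int) : p * s = 1 -> p = 1 \/ p = -1.
Proof.
move=> h; have := @intUnitRing.unitzPl p s; rewrite mulrC => /(_ h).
by rewrite qualifE => /orP [/eqP|/eqP]; auto.
Qed.

Lemma GI_B0 p q s : p * s = 1 -> GI (m2 p q 0 s).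
Proof.
move=> h; have [hp|hp] := int_unit h; rewrite hp in h.
- have -> : s = 1 by rewrite mul1r in h.
  by rewrite hp; apply: GI_T.
- have -> : s = -1 by rewrite mulN1r in h; rewrite -h opprK.
  have -> : m2 p q 0 (-1) = m2 (-1) 0 0 (-1) * m2 1 (- q) 0 1.
    by rewrite hp m2_mulr; congr m2; ring.
  exact: GI_mul GI_m1 (GI_T _).
Qed.

Lemma GI_sl2_aux (n : nat) p q r s : `|r| <= n%:Z -> p * s - q * r = 1 -> GI (m2 p q r s).
Proof.
elim: n p q r s => [|n IH] p q r s hn hd.
  have r0 : r = 0 by lia.
  by rewrite r0; apply: GI_B0; move: hd; rewrite r0 mulr0 subr0.
have [r0|rn0] := eqVneq r 0.
  by rewrite r0; apply: GI_B0; move: hd; rewrite r0 mulr0 subr0.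
set m := (p %/ r)%Z; set p1 := (p %% r)%Z.
have ep : p = m * r + p1 by apply: divz_eq.
have p1ge : 0 <= p1 by apply: modz_ge0.
have p1lt : p1 < `|r| by apply: ltz_mod.
have -> : m2 p q r s = m2 1 m 0 1 * m2 p1 (q - m * s) r s.
  by rewrite m2_mulr {1}ep; congr m2; ring.
apply: GI_mul; first exact: GI_T.
have hd1 : p1 * s - (q - m * s) * r = 1 by rewrite -hd {1}ep; ring.
set q1 := q - m * s in hd1 *.
have [p10|p1n0] := eqVneq p1 0.
  rewrite p10 in hd1 *.
  have hr : r * (- q1) = 1 by rewrite -hd1; ring.
  have [hr1|hr1] := int_unit hr.
  - have -> : m2 0 q1 r s = m2 1 (-1) 0 1 * (m2 1 0 1 1 * m2 1 (q1 + s) 0 (s - (q1 + s))).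
      by rewrite !m2_mulr hr1; congr m2; ring.
    apply: GI_mul; first exact: GI_T.
    apply: GI_mul; first exact: GI_U.
    by apply: GI_B0; rewrite hr1 in hd1; lia.
  - have -> : m2 0 q1 r s = m2 1 1 0 1 * (m2 1 0 (-1) 1 * m2 1 (q1 - s) 0 (s + (q1 - s))).
      by rewrite !m2_mulr hr1; congr m2; ring.
    apply: GI_mul; first exact: GI_T.
    apply: GI_mul; first exact: GI_U.
    by apply: GI_B0; rewrite hr1 in hd1; lia.
set m' := (r %/ p1)%Z; set r1 := (r %% p1)%Z.
have er : r = m' * p1 + r1 by apply: divz_eq.
have r1ge : 0 <= r1 by apply: modz_ge0.
have r1lt : r1 < `|p1| by apply: ltz_mod.
have -> : m2 p1 q1 r s = m2 1 0 m' 1 * m2 p1 q1 r1 (s - m' * q1).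
  by rewrite m2_mulr {1}er; congr m2; ring.
apply: GI_mul; first exact: GI_U.
apply: IH; first lia.
by rewrite -hd1 er; ring.
Qed.

Lemma GI_sl2 (M : 'M[int]_2) : \det M = 1 -> GI M.
Proof.
rewrite [M]m2_eta det_m2 => hd.
exact: (@GI_sl2_aux `|M ord_max ord0|%N).
Qed.
Section Winv.
Variable R : unitRingType.
Variables s1 s2 : R.
Hypothesis us1 : s1 \is a GRing.unit.
Hypothesis us2 : s2 \is a GRing.unit.
Definition winv (w : seq (bool * bool)) := rev (map (fun g => (g.1, ~~ g.2)) w).

Lemma gen_unit g : gen s1 s2 g \is a GRing.unit.
Proof. by case: g => [[] []]; rewrite /gen /= ?unitrV. Qed.

Lemma unit_evw w : evw s1 s2 w \is a GRing.unit.
Proof. elim: w => [|g w IH] /=; [exact: unitr1 | by rewrite unitrMl // gen_unit]. Qed.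

Lemma gen_inv g : gen s1 s2 (g.1, ~~ g.2) * gen s1 s2 g = 1.
Proof. by case: g => [[] []]; rewrite /gen /= ?mulVr ?mulrV. Qed.

Lemma winv_mul w : evw s1 s2 (winv w) * evw s1 s2 w = 1.
Proof.
elim: w => [|g w IH] /=; first by rewrite mulr1.
rewrite /winv /= rev_cons -cats1 evw_cat -/(winv w) /= mulr1.
by rewrite -mulrA (mulrA (gen _ _ _)) gen_inv mul1r.
Qed.

Lemma evw_winv w : evw s1 s2 (winv w) = (evw s1 s2 w)^-1.
Proof. by rewrite -[LHS](mulrK (unit_evw w)) winv_mul mul1r. Qed.
End Winv.

Lemma bw_cat w1 w2 : beta_word (w1 ++ w2) = beta_word w1 *m beta_word w2.
Proof. rewrite !beta_wordE evw_cat; reflexivity. Qed.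

Lemma sign_pow (R : unitRingType) (k : int) : (-1 : R) ^ k = 1 \/ (-1 : R) ^ k = -1.
Proof.
have P : forall n : nat, (-1 : R) ^+ n = 1 \/ (-1 : R) ^+ n = -1.
  elim => [|n [IH|IH]]; first by left; rewrite expr0.
    by right; rewrite exprS IH mulr1.
  by left; rewrite exprS IH mulrNN mulr1.
case: k => n; first exact: P.
rewrite /exprz; case: (P n.+1) => ->; [left; exact: invr1 | right; exact: invrN1].
Qed.

Lemma KER w : rword w = 1 \/ rword w = -1 -> exists k, beta_word w = beta_Delta ^ k.
Proof.
move=> H.
have EK := nf_ofP hKa hKb uzK us1K us2K hKs1e hKs1i hKs2e hKs2i w.
have EI := nf_ofP hIa hIb hIz hIs1 hIs2 hIs1e hIs1i hIs2e hIs2i w.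
rewrite /rword EI in H; rewrite beta_wordE EK.
case: (nf_of w) H => k c /= H.
have Hc : coreval aI bI c = 1 \/ coreval aI bI c = -1.
  rewrite /nfval /= in H.
  case: (sign_pow 'M[int]_2 k) => E; rewrite /zI E ?mul1r ?mulN1r in H.
    by [].
  by case: H => H; [right | left]; rewrite -[coreval _ _ _]opprK H ?opprK.
rewrite (coreI Hc) /nfval /= !mulr1; exists k; reflexivity.
Qed.
Lemma intK_inj (a b : int) : (a%:~R : K) = b%:~R -> a = b.
Proof.
move=> h; have : tofrac (a%:~R : {poly int}) = tofrac (b%:~R) by rewrite !rmorph_int.
move/eqP; rewrite tofrac_eq => /eqP e.
have := congr1 (fun p : {poly int} => p`_0) e; rewrite /= !coefMrz coef1 /=.
by rewrite !intz.
Qed.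

Lemma intmxK_m2 (a b c d : int) : intmxK (m2 a b c d) = m2 a%:~R b%:~R c%:~R d%:~R.
Proof.
apply/matrixP => i j; rewrite !mxE.
by case: i => [[|[|//]] Hi]; case: j => [[|[|//]] Hj].
Qed.

Lemma intmxK_mul (X Y : 'M[int]_2) : intmxK (X * Y) = intmxK X *m intmxK Y.
Proof.
rewrite [X]m2_eta [Y]m2_eta m2_mulr !intmxK_m2 m2_mul.
by congr m2; rewrite !intrD !intrM.
Qed.

Lemma intmxK_inj (X Y : 'M[int]_2) : intmxK X = intmxK Y -> X = Y.
Proof.
rewrite [X]m2_eta [Y]m2_eta !intmxK_m2 => /m2_inj [e1 e2 e3 e4].
by rewrite (intK_inj e1) (intK_inj e2) (intK_inj e3) (intK_inj e4).
Qed.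

Lemma intmxK_1 : intmxK 1 = 1%:M.
Proof. by rewrite one2 intmxK_m2 mulr1z mulr0z m2_1. Qed.

Lemma intmxK_N1 : intmxK (-1) = (-1 : K) *: 1%:M.
Proof.
rewrite mone2 intmxK_m2 mulrN1z mulr0z m2_1.
apply/matrixP => i j; rewrite !mxE.
by case: i => [[|[|//]] Hi]; case: j => [[|[|//]] Hj]; rewrite /= ?mulr1 ?mulr0 ?oppr0.
Qed.

Lemma bw1 g : beta_word [:: g] = beta_gen g.
Proof. by rewrite /= mulmx1. Qed.

Lemma CEN w : (forall C, inBu C -> beta_word w *m C = C *m beta_word w) ->
  rword w = 1 \/ rword w = -1.
Proof.
move=> H.
have C1 : forall g, rword w * gen s1I s2I g = gen s1I s2I g * rword w.
  move=> g; have := H _ (ex_intro _ [:: g] erefl).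
  rewrite -!bw_cat => /(congr1 rhoK); rewrite !rhoK_word => /intmxK_inj.
  by rewrite !rword_cat /rword /= !mulr1.
have := C1 (true, false); have := C1 (false, false); rewrite !genI.
have D := det_rword w.
move: (rword w) D => M; rewrite [M]m2_eta det_m2.
move: (M _ _) (M _ _) (M _ _) (M _ _) => p q r s hd.
rewrite !m2_mulr => /m2_inj [e1 e2 e3 e4] /m2_inj [f1 f2 f3 f4].
have p0 : p = 0 by lia.
have q0 : q = 0 by lia.
have sr : s = r by lia.
rewrite p0 q0 sr mulr0 subr0 in hd *.
have [->|->] := int_unit hd; [left; exact: esym one2 | right; exact: esym mone2].
Qed.

Lemma PGL (M : 'M[int]_2) : \det M = 1 -> pgl_eq (intmxK M) 1%:M -> M = 1 \/ M = -1.
Proof.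
move=> hd [c [c0 E]].
have e : forall i j, (M i j)%:~R = (c *: (1%:M : 'M[K]_2)) i j by move=> i j; rewrite -E mxE.
have e01 := e ord0 ord_max; have e10 := e ord_max ord0.
have e00 := e ord0 ord0; have e11 := e ord_max ord_max.
rewrite !mxE /= mulr0 -(mulr0z 1) in e01 e10.
rewrite !mxE /= mulr1 in e00 e11.
move/intK_inj: e01 => e01; move/intK_inj: e10 => e10.
rewrite -e11 in e00; move/intK_inj: e00 => e00.
move: hd; rewrite [M]m2_eta det_m2 e01 e10 e00 mulr0 subr0 => hd.
have [E1|E1] := int_unit hd; rewrite E1; [left; exact: esym one2 | right; exact: esym mone2].
Qed.
Definition Pm : 'M[K]_3 := mk3 1 (-1) 0 0 0 0 0 0 0.

Lemma scale_mk3 (c a b d e f g h k l : K) :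
  c *: mk3 a b d e f g h k l = mk3 (c * a) (c * b) (c * d) (c * e) (c * f) (c * g) (c * h) (c * k) (c * l).
Proof.
apply/matrixP => i j; rewrite !mxE.
by case: i => [[|[|[|//]]] Hi]; case: j => [[|[|[|//]]] Hj].
Qed.

Lemma PZ : Pm *m beta_Delta = tK ^+ 3 *: Pm.
Proof.
rewrite zKE /aK /Pm /beta_s1 /beta_s2 !mx3E !mk3_mulr mk3_mul scale_mk3.
congr mk3; ring.
Qed.

Lemma PZn n : Pm *m beta_Delta ^+ n = tK ^+ (3 * n) *: Pm.
Proof.
elim: n => [|n IH]; first by rewrite expr0 muln0 expr0 scale1r; exact: mulmx1.
rewrite exprS -mulmxE mulmxA PZ -scalemxAl IH scalerA -exprD.
by rewrite mulnS addnC.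
Qed.

Lemma tKn_eq1 m : tK ^+ m = 1 -> m = 0%N.
Proof.
rewrite /tK -tofracXn -tofrac1 => /eqP; rewrite tofrac_eq => /eqP E.
have := congr1 (fun p : {poly int} => size p) E; rewrite /= size_polyXn size_poly1; by case.
Qed.

Lemma Zn_eq1 n : beta_Delta ^+ n = 1 -> n = 0%N.
Proof.
move=> E; have := PZn n; rewrite E mulmx1 => E2.
have := congr1 (fun M : 'M[K]_3 => M ord0 ord0) E2; rewrite /= !mxE /= mulr1 => E3.
by have := tKn_eq1 (esym E3); case: n {E E2 E3}.
Qed.

Lemma Zpow_Bu k : inBu (beta_Delta ^ k).
Proof.
have Pn : forall n, exists w, beta_word w = beta_Delta ^+ n.
  elim => [|n [w E]]; first by exists [::]; rewrite expr0; reflexivity.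
  exists ([:: (true, false); (false, false); (true, false);
                (true, false); (false, false); (true, false)] ++ w).
  rewrite bw_cat E exprS; reflexivity.
case: k => n; first by have [w E] := Pn n; exists w; rewrite E; reflexivity.
have [w E] := Pn n.+1; exists (winv w).
rewrite beta_wordE (evw_winv us1K us2K) -beta_wordE E; reflexivity.
Qed.

Lemma Zpow_comm k C : inBu C -> beta_Delta ^ k *m C = C *m beta_Delta ^ k.
Proof.
move=> [w ->]; rewrite beta_wordE.
exact: (zkevw hKa hKb uzK hKs1e hKs2e k w).
Qed.

Lemma Zinj : injective (fun k : int => beta_Delta ^ k).
Proof.
move=> k m /= E.
have uZm := unitrXz m uzK.
have E1 : beta_Delta ^ (k - m) = 1.
  apply: (mulIr uZm); rewrite mul1r -(exprzDr uzK) subrK; exact: E.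
suff : k - m = 0 by move/eqP; rewrite subr_eq0 => /eqP.
move: E1; case: (k - m) => n.
  by move/Zn_eq1 => ->.
rewrite /exprz => E2.
have : beta_Delta ^+ n.+1 = 1 by rewrite -[LHS]invrK E2 invr1.
by move/Zn_eq1.
Qed.
Theorem lemma3p9 :
  (* rhobar restricted to Bu is a homomorphism *)
  (forall A C, inBu A -> inBu C -> pgl_eq (rhoK (A *m C)) (rhoK A *m rhoK C)) /\
  (* with values in PSL(2,Z) *)
  (forall A, inBu A -> exists M : 'M[int]_2, \det M = 1 /\ pgl_eq (rhoK A) (intmxK M)) /\
  (* surjective onto PSL(2,Z) *)
  (forall M : 'M[int]_2, \det M = 1 -> exists A, inBu A /\ pgl_eq (rhoK A) (intmxK M)) /\
  (* kernel = center of Bu *)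
  (forall A, inBu A -> (pgl_eq (rhoK A) 1%:M <-> inZBu A)) /\
  (* center is generated by beta(Delta) *)
  (forall A, inZBu A <-> exists k : int, A = beta_Delta ^ k) /\
  (* and is infinite cyclic *)
  injective (fun k : int => beta_Delta ^ k).
Proof.
split.
  move=> A C [w1 ->] [w2 ->]; exists 1; split; first exact: oner_neq0.
  rewrite scale1r -bw_cat !rhoK_word rword_cat intmxK_mul; reflexivity.
split.
  move=> A [w ->]; exists (rword w); split; first exact: det_rword.
  exists 1; split; first exact: oner_neq0.
  rewrite scale1r rhoK_word; reflexivity.
split.
  move=> M hM; have [w E] := GI_sl2 hM.
  exists (beta_word w); split; first by exists w.
  exists 1; split; first exact: oner_neq0.
  rewrite scale1r rhoK_word E; reflexivity.
have CENTER : forall A, inZBu A -> exists w, A = beta_word w /\ (rword w = 1 \/ rword w = -1).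
  move=> A [[w ->] H]; exists w; split; first reflexivity.
  exact: CEN H.
have ZC : forall k, inZBu (beta_Delta ^ k).
  by move=> k; split; [exact: Zpow_Bu | move=> C hC; exact: Zpow_comm].
split.
  move=> A [w ->]; split.
    move=> hp; have hd := det_rword w.
    rewrite rhoK_word in hp.
    have [k ->] := KER (PGL hd hp); exact: ZC.
  move=> /CENTER [w' [E H]]; rewrite E rhoK_word.
  case: H => ->.
    exists 1; split; first exact: oner_neq0.
    rewrite scale1r intmxK_1; reflexivity.
  exists (-1); split; first by rewrite oppr_eq0; exact: oner_neq0.
  exact: intmxK_N1.
split.
  move=> A; split.
    by move=> /CENTER [w [-> H]]; exact: KER H.
  by move=> [k ->]; exact: ZC.
exact: Zinj.
Qed.
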